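(* Let $T$ be a tournament and let $X,M\subseteq V(T)$ be such that $X$ dominates $T$. Then $T$ is $M$-sparse if and only if $T[X]$ is $(M\cap X)$-sparse and $T-X$ is $(M\setminus X)$-sparse.
   Context: A tournament is a digraph with exactly one arc between each pair of distinct vertices; $T[X]$ is the subtournament induced by $X$ and $T-X$ the one induced by $V(T)\setminus X$. $X$ dominates $T$ if $(x,y)\in A(T)$ for every $x\in X$ and every $y\in V(T)\setminus X$. For an ordering $\sigma$ of the vertices of a tournament, an arc $(x,y)$ is backward if $y$ precedes $x$, and $d_\sigma(v)$ is the number of backward arcs incident to $v$. For a tournament $S$ and $N\subseteq V(S)$, $S$ is $N$-sparse if there is an ordering $\sigma$ of $V(S)$ with $d_\sigma(v)\le1$ for all $v\in V(S)$ and $d_\sigma(v)=0$ for all $v\in N$. *)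

(* Defs.v *)
From mathcomp Require Import all_boot.
Set Implicit Arguments. Unset Strict Implicit. Unset Printing Implicit Defensive.

Definition tournament (T : finType) (arc : rel T) : Prop :=
  (forall x, ~~ arc x x) /\
  (forall x y, x != y -> arc x y (+) arc y x).

Definition dominates (T : finType) (arc : rel T) (X : {set T}) : Prop :=
  forall x y, x \in X -> y \notin X -> arc x y.

Definition ordering_of (T : finType) (S : {set T}) (s : seq T) : Prop :=
  uniq s /\ s =i S.

Definition backward (T : finType) (arc : rel T) (s : seq T) (x y : T) : bool :=
  arc x y && (index y s < index x s).

Definition dback (T : finType) (arc : rel T) (S : {set T}) (s : seq T) (v : T) : nat :=
  #|[set u in S | backward arc s v u || backward arc s u v]|.

Definition sparse (T : finType) (arc : rel T) (S N : {set T}) : Prop :=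
  exists s : seq T, ordering_of S s /\
    (forall v, v \in S -> dback arc S s v <= 1) /\
    (forall v, v \in N -> dback arc S s v = 0).

(* Main.v *)
Require Import Defs.
From mathcomp Require Import all_boot.
Set Implicit Arguments. Unset Strict Implicit. Unset Printing Implicit Defensive.

Lemma index_filter (T : eqType) (p : pred T) (s : seq T) x y :
  p x -> p y -> x \in s -> y \in s ->
  (index x (filter p s) < index y (filter p s)) = (index x s < index y s).
Proof.
move=> px py; elim: s => [//|a s IH] /=.
rewrite !inE => xs ys.
case pa: (p a) => /=.
  case: (eqVneq a x) => [e|ax]; first by subst; case: (_ == y).
  case: (eqVneq a y) => [e|ay]; first by subst; rewrite !ltn0.
  rewrite ltnS; apply: IH; [by move: xs; rewrite eq_sym (negbTE ax) | by move: ys; rewrite eq_sym (negbTE ay)].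
have ax : a != x by apply: contraFN pa => /eqP ->.
have ay : a != y by apply: contraFN pa => /eqP ->.
rewrite (negbTE ax) (negbTE ay) ltnS; apply: IH; [by move: xs; rewrite eq_sym (negbTE ax) | by move: ys; rewrite eq_sym (negbTE ay)].
Qed.

Lemma restrict_sparse (T : finType) (arc : rel T) (X M : {set T}) :
  sparse arc [set: T] M -> sparse arc X (M :&: X).
Proof.
case=> s [[us ms] [H1 H0]].
have le v : v \in X -> dback arc X (filter (mem X) s) v <= dback arc [set: T] s v.
  move=> vX; apply: subset_leq_card; apply/subsetP => u; rewrite !inE.
  case/andP => uX; rewrite /backward !index_filter //; by rewrite ?ms ?inE.
exists (filter (mem X) s); split; [split|split].
- exact: filter_uniq.
- by move=> x; rewrite mem_filter ms !inE andbT.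
- move=> v vX; exact: leq_trans (le v vX) (H1 v (in_setT v)).
- move=> v; rewrite inE => /andP [vM vX].
  by apply/eqP; rewrite -leqn0 -(H0 v vM) le.
Qed.

Theorem mainTheorem13 (T : finType) (arc : rel T) (X M : {set T}) :
  tournament arc -> dominates arc X ->
  sparse arc [set: T] M <->
  (sparse arc X (M :&: X) /\ sparse arc (~: X) (M :\: X)).
Proof.
move=> [irr tour] dom; split.
  move=> H; split; first exact: restrict_sparse.
  have -> : M :\: X = M :&: ~: X by rewrite setDE.
  exact: restrict_sparse.
case=> [[s1 [[u1 m1] [A1 A0]]] [s2 [[u2 m2] [B1 B0]]]].
have noarc u v : u \in X -> v \notin X -> arc v u = false.
  move=> uX vX; have auv := dom _ _ uX vX.
  have nuv : u != v by apply: contraNneq vX => <-.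
  by move: (tour _ _ nuv); rewrite auv /= => /negbTE.
have eX v : v \in X -> dback arc [set: T] (s1 ++ s2) v = dback arc X s1 v.
  move=> vX; rewrite /dback; apply: eq_card => u; rewrite !inE /backward.
  rewrite !index_cat !m1 vX /=.
  case uX: (u \in X).
    by [].
  rewrite (noarc v u vX (negbT uX)) /= orbF.
  have := index_mem v s1; rewrite m1 vX => hv.
  by rewrite ltnNge (leq_trans (ltnW hv) (leq_addr _ _)) andbF.
have eNX v : v \notin X -> dback arc [set: T] (s1 ++ s2) v = dback arc (~: X) s2 v.
  move=> vX; rewrite /dback; apply: eq_card => u; rewrite !inE /backward.
  rewrite !index_cat !m1 (negbTE vX).
  case uX: (u \in X) => /=.
    rewrite (noarc u v uX vX) /=.
    have := index_mem u s1; rewrite m1 uX => hu.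
    by rewrite ltnNge (leq_trans (ltnW hu) (leq_addr _ _)) andbF.
  by rewrite !ltn_add2l.
exists (s1 ++ s2); split; [split|split].
- rewrite cat_uniq u1 u2 andbT; apply/hasPn => x /=; rewrite m2 m1 inE; by [].
- by move=> x; rewrite mem_cat m1 m2 !inE orbN.
- move=> v _; case vX: (v \in X).
    by rewrite eX // A1.
  by rewrite eNX ?vX // B1 // inE vX.
- move=> v vM; case vX: (v \in X).
    by rewrite eX // A0 // inE vM vX.
  by rewrite eNX ?vX // B0 // !inE vM vX.
Qed.
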